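(* Let $(F,v)$ be a valued field. Every nonsingular quadratic space $(V,q)$ over $F$ admits a $v$-norm which is compatible with $q$ of some depth $\varepsilon\in\frac12\Gamma_F$ with $0\le\varepsilon\le v(2)$. Moreover, every hyperbolic quadratic space over $F$ admits a tame (i.e. depth $0$) compatible $v$-norm.
   Context: $F$ is a field with valuation $v\colon F\to\Gamma\cup\{\infty\}$, $\Gamma$ divisible totally ordered abelian group, $\Gamma_F=v(F^\times)$, $\frac12\Gamma_F=\{\gamma\in\Gamma:2\gamma\in\Gamma_F\}$; $v(2)=\infty$ iff $\operatorname{char}F=2$. A quadratic form is nonsingular if its polar form $b_q(x,y)=q(x+y)-q(x)-q(y)$ is nondegenerate. A $v$-norm on a finite-dimensional $F$-space $V$ is a map $\alpha\colon V\to\Gamma\cup\{\infty\}$ with $\alpha(x)=\infty\iff x=0$, $\alpha(\lambda x)=v(\lambda)+\alpha(x)$, $\alpha(x+y)\ge\min(\alpha(x),\alpha(y))$, admitting a basis $(e_i)$ with $\alpha(\sum\lambda_ie_i)=\min_i\alpha(\lambda_ie_i)$. For $\varepsilon\in\Gamma$, $\varepsilon\ge0$, $\alpha$ is compatible of depth $\varepsilon$ with $q$ if (a) $v(b_q(x,y))\ge\alpha(x)+\alpha(y)+\varepsilon$ for all $x,y$; (b) $v(q(x))\ge2\alpha(x)$ for all $x$; (c) for every $x\neq0$ there exists $y\neq0$ with $v(b_q(x,y))=\alpha(x)+\alpha(y)+\varepsilon$. Tame means depth $0$. *)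

(* Defs.v *)
From HB Require Import structures.
From mathcomp Require Import all_boot all_order all_algebra.
Set Implicit Arguments. Unset Strict Implicit. Unset Printing Implicit Defensive.
Import Order.TTheory GRing.Theory Num.Theory.
Local Open Scope ring_scope.

Definition divisible_ordered_group (G : porderZmodType) : Prop :=
  [/\ (forall a b : G, (a <= b) || (b <= a)),
      (forall a b c : G, a <= b -> a + c <= b + c) &
      (forall (n : nat) (g : G), (0 < n)%N -> exists h : G, h *+ n = g)].

(* Gamma \cup {oo} is represented by option G, with None = oo. *)
Definition vle (G : porderZmodType) (a b : option G) : bool :=
  match a, b with
  | _, None => true
  | None, Some _ => false
  | Some x, Some y => x <= y
  end.

Definition vadd (G : porderZmodType) (a b : option G) : option G :=
  match a, b with
  | Some x, Some y => Some (x + y)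
  | _, _ => None
  end.

Definition vmin (G : porderZmodType) (a b : option G) : option G :=
  if vle a b then a else b.

Definition valuation (F : fieldType) (G : porderZmodType) (v : F -> option G) : Prop :=
  [/\ (forall x, v x = None <-> x = 0),
      (forall x y, v (x * y) = vadd (v x) (v y)) &
      (forall x y, vle (vmin (v x) (v y)) (v (x + y)))].

Definition in_half_value_group (F : fieldType) (G : porderZmodType)
  (v : F -> option G) (eps : G) : Prop :=
  exists x : F, x != 0 /\ v x = Some (eps + eps).

Definition polar (F : fieldType) (V : vectType F) (q : V -> F) (x y : V) : F :=
  q (x + y) - q x - q y.

Definition quadratic_form (F : fieldType) (V : vectType F) (q : V -> F) : Prop :=
  [/\ (forall (a : F) (x : V), q (a *: x) = a ^+ 2 * q x),
      (forall x y z : V, polar q (x + y) z = polar q x z + polar q y z) &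
      (forall (a : F) (x y : V), polar q (a *: x) y = a * polar q x y)].

Definition nonsingular (F : fieldType) (V : vectType F) (q : V -> F) : Prop :=
  forall x : V, (forall y : V, polar q x y = 0) -> x = 0.

(* hyperbolic quadratic space: orthogonal sum of hyperbolic planes, i.e.
   V has a basis e_1..e_n, f_1..f_n with q(sum a_i e_i + b_i f_i) = sum a_i b_i *)
Definition hyperbolic (F : fieldType) (V : vectType F) (q : V -> F) : Prop :=
  exists (n : nat) (e f : n.-tuple V),
    basis_of fullv (tval e ++ tval f) /\
    forall a b : 'I_n -> F,
      q (\sum_(i < n) (a i *: tnth e i + b i *: tnth f i)) = \sum_(i < n) a i * b i.

Definition vnorm (F : fieldType) (G : porderZmodType) (v : F -> option G)
  (V : vectType F) (alpha : V -> option G) : Prop :=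
  [/\ (forall x, alpha x = None <-> x = 0),
      (forall (l : F) (x : V), alpha (l *: x) = vadd (v l) (alpha x)),
      (forall x y, vle (vmin (alpha x) (alpha y)) (alpha (x + y))) &
      (exists e : seq V, basis_of fullv e /\
         forall l : 'I_(size e) -> F,
           alpha (\sum_(i < size e) l i *: e`_i)
           = foldr (@vmin G) None [seq alpha (l i *: e`_i) | i <- enum 'I_(size e)])].

Definition compatible (F : fieldType) (G : porderZmodType) (v : F -> option G)
  (V : vectType F) (q : V -> F) (alpha : V -> option G) (eps : G) : Prop :=
  [/\ (forall x y : V, vle (vadd (vadd (alpha x) (alpha y)) (Some eps)) (v (polar q x y))),
      (forall x : V, vle (vadd (alpha x) (alpha x)) (v (q x))) &
      (forall x : V, x != 0 -> exists y : V, y != 0 /\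
          v (polar q x y) = vadd (vadd (alpha x) (alpha y)) (Some eps))].

(* Main.v *)
Require Import Defs.
From HB Require Import structures.
From Stdlib Require Import Classical.
From mathcomp Require Import all_boot all_order all_algebra ring zify.
Import Order.TTheory GRing.Theory Num.Theory.
Local Open Scope ring_scope.
Set Implicit Arguments.
Unset Strict Implicit.

Section OG.
Variable G : porderZmodType.
Hypothesis Htot : forall a b : G, (a <= b) || (b <= a).
Hypothesis Hmono : forall a b c : G, a <= b -> a + c <= b + c.

Lemma gle_trans {a b c : G} : a <= b -> b <= c -> a <= c.
Proof. move=> h1 h2; exact: (le_trans h1 h2). Qed.

Lemma lerD2 (a b c d : G) : a <= b -> c <= d -> a + c <= b + d.
Proof.
move=> h1 h2; apply: (gle_trans (Hmono c h1)).
by rewrite ![b + _]addrC; apply: Hmono.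
Qed.

Lemma lerK (a b c : G) : a + c <= b + c -> a <= b.
Proof. by move=> /(Hmono (- c)); rewrite !addrK. Qed.

Lemma half_ge0 (h : G) : 0 <= h + h -> 0 <= h.
Proof.
move=> H; case/orP: (Htot 0 h) => // hle.
have : h + h <= h by have := Hmono h hle; rewrite add0r.
move=> H2; exact: gle_trans H H2.
Qed.

Lemma vle_refl (a : option G) : vle a a.
Proof. by case: a => //= x; exact: lexx. Qed.

Lemma vle_trans {a b c : option G} : vle a b -> vle b c -> vle a c.
Proof. by case: a b c => [x|] [y|] [z|] //=; apply: gle_trans. Qed.

Lemma vle_total (a b : option G) : vle a b || vle b a.
Proof. by case: a b => [x|] [y|] //=. Qed.

Lemma vle_anti (a b : option G) : vle a b -> vle b a -> a = b.
Proof.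
case: a b => [x|] [y|] //= h1 h2; congr Some; apply/le_anti; by rewrite h1 h2.
Qed.

Lemma vleNone (a : option G) : vle a None.
Proof. by case: a. Qed.

Lemma vle_None (a : option G) : vle None a -> a = None.
Proof. by case: a. Qed.

Lemma vmin_l (a b : option G) : vle (vmin a b) a.
Proof.
rewrite /vmin; case: ifP => [_|/negbT h]; first exact: vle_refl.
by have := vle_total a b; rewrite (negbTE h).
Qed.

Lemma vmin_r (a b : option G) : vle (vmin a b) b.
Proof. rewrite /vmin; case: ifP => // _; exact: vle_refl. Qed.

Lemma vmin_glb (c a b : option G) : vle c a -> vle c b -> vle c (vmin a b).
Proof. by rewrite /vmin; case: ifP. Qed.

Lemma vmin_mono (a b a' b' : option G) :
  vle a a' -> vle b b' -> vle (vmin a b) (vmin a' b').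
Proof.
move=> h1 h2; apply: vmin_glb.
  exact: vle_trans (vmin_l _ _) h1.
exact: vle_trans (vmin_r _ _) h2.
Qed.

Lemma vmin_eq (a b : option G) : vmin a b = a \/ vmin a b = b.
Proof. by rewrite /vmin; case: ifP; auto. Qed.

Lemma vaddC (a b : option G) : vadd a b = vadd b a.
Proof. by case: a b => [x|] [y|] //=; rewrite addrC. Qed.

Lemma vaddA (a b c : option G) : vadd a (vadd b c) = vadd (vadd a b) c.
Proof. by case: a b c => [x|] [y|] [z|] //=; rewrite addrA. Qed.

Lemma vaddNone (a : option G) : vadd a None = None.
Proof. by case: a. Qed.

Lemma vadd_mono (a b c : option G) : vle a b -> vle (vadd a c) (vadd b c).
Proof. by case: a b c => [x|] [y|] [z|] //=; apply: Hmono. Qed.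

Lemma vadd_mono2 (a b c d : option G) :
  vle a b -> vle c d -> vle (vadd a c) (vadd b d).
Proof.
move=> h1 h2; apply: (vle_trans (vadd_mono c h1)).
by rewrite ![vadd b _]vaddC; apply: vadd_mono.
Qed.

Lemma vadd_monoE (a b : option G) (g : G) :
  vle (vadd a (Some g)) (vadd b (Some g)) = vle a b.
Proof.
apply/idP/idP; last exact: vadd_mono.
by case: a b => [x|] [y|] //=; apply: lerK.
Qed.

Lemma vadd_vmin (a b c : option G) : vadd (vmin a b) c = vmin (vadd a c) (vadd b c).
Proof.
case: c => [g|]; last by rewrite /vmin; do 3 rewrite vaddNone.
by rewrite /vmin vadd_monoE; case: ifP.
Qed.

Lemma vle_addr (a : option G) (g : G) : 0 <= g -> vle a (vadd a (Some g)).
Proof. by case: a => //= x h; have := Hmono x h; rewrite add0r addrC. Qed.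

Definition vminl (l : seq (option G)) := foldr (@vmin G) None l.

Lemma vle_vminl (c : option G) l : vle c (vminl l) <-> all (vle c) l.
Proof.
elim: l => [|a l IH] /=; first by split=> // _; apply: vleNone.
split.
  move=> h; apply/andP; split; first exact: vle_trans h (vmin_l _ _).
  by apply/IH; exact: vle_trans h (vmin_r _ _).
by case/andP=> h1 /IH h2; apply: vmin_glb.
Qed.

Lemma vminl_le l a : a \in l -> vle (vminl l) a.
Proof.
move=> al; have /vle_vminl/allP := vle_refl (vminl l); exact.
Qed.

Lemma vminl_mem l : vminl l \in None :: l.
Proof.
elim: l => [|a l IH] /=; first by rewrite inE.
case: (vmin_eq a (vminl l)) => ->; first by rewrite !inE eqxx orbT.
move: IH; rewrite !inE => /orP[/eqP->|->]; last by rewrite !orbT.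
by rewrite /vmin ?eqxx.
Qed.

Lemma vminl_vadd l d : vminl (map (fun a => vadd d a) l) = vadd d (vminl l).
Proof.
elim: l => [|a l IH] /=; first by rewrite vaddNone.
by rewrite IH ![vadd d _]vaddC vadd_vmin.
Qed.



Hypothesis Hdiv : forall (n : nat) (g : G), (0 < n)%N -> exists h : G, h *+ n = g.

Lemma halve (g : G) : exists h : G, h + h = g.
Proof. have [h <-] := @Hdiv 2 g isT; exists h; by rewrite mulr2n. Qed.

Lemma two_eq0 {g : G} : g + g = 0 -> g = 0.
Proof.
move=> h; apply/le_anti; case/orP: (Htot 0 g) => H.
  have := Hmono g H; rewrite add0r h => H2; by rewrite H2 H.
have := Hmono g H; rewrite add0r h => H2; by rewrite H2 H.
Qed.

Set Implicit Arguments.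
Unset Strict Implicit.

Section Val.
Variables (F : fieldType) (v : F -> option G).
Hypothesis Hval : valuation v.

Lemma v0 : v 0 = None.
Proof. by case: Hval => H _ _; apply/H. Qed.

Lemma vNone x : v x = None -> x = 0.
Proof. by case: Hval => H _ _; move/H. Qed.

Lemma vM x y : v (x * y) = vadd (v x) (v y).
Proof. by case: Hval. Qed.

Lemma vD x y : vle (vmin (v x) (v y)) (v (x + y)).
Proof. by case: Hval. Qed.

Lemma vnz {x} : x != 0 -> exists g, v x = Some g.
Proof.
case E: (v x) => [g|]; first by eauto.
by move/vNone: E => ->; rewrite eqxx.
Qed.

Lemma vSome {x g} : v x = Some g -> x != 0.
Proof. by move=> h; apply/eqP => x0; rewrite x0 v0 in h. Qed.

Lemma v1 : v 1 = Some 0.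
Proof.
have [g Hg] := vnz (oner_neq0 F).
have := vM 1 1; rewrite mulr1 Hg /= => -[h].
have : g + g = g + 0 by rewrite addr0 -h.
by move/addrI => <-.
Qed.

Lemma vN1 : v (-1) = Some 0.
Proof.
have [g Hg] : exists g, v (-1) = Some g by apply: vnz; rewrite oppr_eq0 oner_neq0.
have := vM (-1) (-1); rewrite mulrNN mulr1 v1 Hg /= => -[h].
move: Hg; rewrite (two_eq0 (esym h)); exact.
Qed.

Lemma vadd0 (a : option G) : vadd (Some 0) a = a.
Proof. by case: a => //= x; rewrite add0r. Qed.

Lemma vN x : v (- x) = v x.
Proof. by rewrite -mulN1r vM vN1 vadd0. Qed.

Lemma vB x y : vle (vmin (v x) (v y)) (v (x - y)).
Proof. by rewrite -(vN y) vD. Qed.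

Lemma vsum (I : Type) (r : seq I) (f : I -> F) :
  vle (vminl (map (fun i => v (f i)) r)) (v (\sum_(i <- r) f i)).
Proof.
elim: r => [|i r IH] /=; first by rewrite big_nil v0.
rewrite big_cons; apply: vle_trans (vD _ _).
apply: vmin_mono => //; exact: vle_refl.
Qed.

Lemma v2 : vle (Some 0) (v 2%:R).
Proof. by rewrite -[2%:R]/(1 *+ 2) mulr2n; apply: vle_trans (vD _ _); rewrite v1 /vmin /= lexx. Qed.

Lemma vinv {x g} : v x = Some g -> v (x^-1) = Some (- g).
Proof.
move=> h; have nz := vSome h.
have [k Hk] := vnz (invr_neq0 nz).
have := vM x (x^-1); rewrite mulfV // v1 h Hk /= => -[e].
congr Some; apply/(addrI g); by rewrite -e subrr.
Qed.

End Val.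

Section QF.
Variables (F : fieldType) (V : vectType F) (q : V -> F).
Hypothesis Hq : quadratic_form q.

Lemma polarDl x y z : polar q (x + y) z = polar q x z + polar q y z.
Proof. by case: Hq. Qed.

Lemma polarZl a x y : polar q (a *: x) y = a * polar q x y.
Proof. by case: Hq. Qed.

Lemma qZ a x : q (a *: x) = a ^+ 2 * q x.
Proof. by case: Hq. Qed.

Lemma polar_sym x y : polar q x y = polar q y x.
Proof. by rewrite /polar [x + y]addrC -!addrA [- q x + _]addrC. Qed.

Lemma polarDr x y z : polar q z (x + y) = polar q z x + polar q z y.
Proof. by rewrite !(polar_sym z) polarDl. Qed.

Lemma polarZr a x y : polar q y (a *: x) = a * polar q y x.
Proof. by rewrite !(polar_sym y) polarZl. Qed.

Lemma polar0l y : polar q 0 y = 0.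
Proof. by rewrite -(scale0r 0) polarZl mul0r. Qed.

Lemma polar0r y : polar q y 0 = 0.
Proof. by rewrite polar_sym polar0l. Qed.

Lemma polarNl x y : polar q (- x) y = - polar q x y.
Proof. by rewrite -scaleN1r polarZl mulN1r. Qed.

Lemma polarBl x y z : polar q (x - y) z = polar q x z - polar q y z.
Proof. by rewrite polarDl polarNl. Qed.

Lemma polarBr x y z : polar q z (x - y) = polar q z x - polar q z y.
Proof. by rewrite !(polar_sym z) polarBl. Qed.

Lemma polar_suml (I : Type) (r : seq I) (f : I -> V) y :
  polar q (\sum_(i <- r) f i) y = \sum_(i <- r) polar q (f i) y.
Proof.
elim: r => [|i r IH]; first by rewrite !big_nil polar0l.
by rewrite !big_cons polarDl IH.
Qed.

Lemma polar_sumr (I : Type) (r : seq I) (f : I -> V) y :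
  polar q y (\sum_(i <- r) f i) = \sum_(i <- r) polar q y (f i).
Proof. rewrite polar_sym polar_suml; apply: eq_bigr => i _; exact: polar_sym. Qed.

Lemma q0 : q 0 = 0.
Proof. by rewrite -(scale0r 0) qZ expr0n mul0r. Qed.

Lemma qD x y : q (x + y) = q x + q y + polar q x y.
Proof. rewrite /polar; ring. Qed.

Lemma polar_xx x : polar q x x = 2%:R * q x.
Proof.
rewrite /polar -mulr2n -scaler_nat qZ; ring.
Qed.

End QF.

Lemma enum_idx (T : finType) : enum T = index_enum T.
Proof. by rewrite [index_enum T]unlock enumT. Qed.

Lemma arith1 (a b : option G) x y z :
  vadd (vadd (vadd a (Some x)) (vadd b (Some y))) (Some z)
  = vadd a (vadd b (Some (x + y + z))).
Proof.
case: a b => [a|] [b|] //=; congr Some; rewrite -!addrA; congr (a + _).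
by rewrite addrCA.
Qed.

Lemma arith2 (a : option G) x :
  vadd (vadd a (Some x)) (vadd a (Some x)) = vadd (vadd a a) (Some (x + x)).
Proof.
case: a => [a|] //=; congr Some; rewrite -!addrA; congr (a + _).
by rewrite addrCA.
Qed.

Section Key.
Variables (F : fieldType) (v : F -> option G) (V : vectType F) (q : V -> F).
Hypotheses (Hval : valuation v) (Hq : quadratic_form q).
Variables (e : seq V) (s : seq G) (eps : G).
Hypotheses (Hb : basis_of fullv e) (Heps : 0 <= eps).
Hypothesis W1 : forall i j, (i < size e)%N -> (j < size e)%N ->
  vle (Some (s`_i + s`_j + eps)) (v (polar q e`_i e`_j)).
Hypothesis W2 : forall i, (i < size e)%N -> vle (Some (s`_i + s`_i)) (v (q e`_i)).
Hypothesis W3 : forall i, (i < size e)%N -> exists j,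
  [/\ (j < size e)%N, v (polar q e`_i e`_j) = Some (s`_i + s`_j + eps)
    & forall k, (k < size e)%N -> k != i -> polar q e`_k e`_j = 0].

Local Notation n := (size e).
Let X := in_tuple e.

Definition term (c : 'I_n -> F) (i : 'I_n) := vadd (v (c i)) (Some s`_i).
Definition mn (r : seq 'I_n) c := vminl [seq term c i | i <- r].
Definition alpha (x : V) := mn (enum 'I_n) (fun i => coord X i x).

Lemma free_e : free e.
Proof. exact: basis_free Hb. Qed.

Lemma coordX (i j : 'I_n) : coord X j e`_i = (i == j)%:R.
Proof. exact: (coord_free (X := X)) free_e. Qed.

Lemma expand x : x = \sum_(i <- enum 'I_n) coord X i x *: e`_i.
Proof. rewrite enum_idx; exact: (coord_basis (X := X)) Hb (memvf x). Qed.

Lemma mn_le r c i : i \in r -> vle (mn r c) (term c i).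
Proof. by move=> h; apply: vminl_le; apply: map_f. Qed.

Lemma le_mn r c a : (forall i, i \in r -> vle a (term c i)) -> vle a (mn r c).
Proof. by move=> h; apply/vle_vminl/allP => _ /mapP[i hi ->]; apply: h. Qed.

Lemma polar_bound (r1 r2 : seq 'I_n) c d :
  vle (vadd (vadd (mn r1 c) (mn r2 d)) (Some eps))
      (v (polar q (\sum_(i <- r1) c i *: e`_i) (\sum_(j <- r2) d j *: e`_j))).
Proof.
rewrite (polar_suml Hq); apply: vle_trans (vsum Hval _ _).
apply/vle_vminl/allP => _ /mapP[i hi ->].
rewrite (polar_sumr Hq); apply: vle_trans (vsum Hval _ _).
apply/vle_vminl/allP => _ /mapP[j hj ->].
rewrite (polarZl Hq) (polarZr Hq) !(vM Hval).
apply: (@vle_trans _ (vadd (vadd (vadd (v (c i)) (Some s`_i))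
                      (vadd (v (d j)) (Some s`_j))) (Some eps))).
  by apply: vadd_mono; apply: vadd_mono2; apply: mn_le.
rewrite arith1; apply: vadd_mono2; first exact: vle_refl.
by apply: vadd_mono2; [exact: vle_refl | apply: W1].
Qed.

Lemma q_bound r c :
  vle (vadd (mn r c) (mn r c)) (v (q (\sum_(i <- r) c i *: e`_i))).
Proof.
elim: r => [|i r IH]; first by rewrite big_nil (q0 Hq) (v0 Hval).
rewrite big_cons qD.
have hm1 : vle (mn (i :: r) c) (term c i) by apply: mn_le; rewrite mem_head.
have hm2 : vle (mn (i :: r) c) (mn r c) by exact: vmin_r.
apply: vle_trans (vD Hval _ _); apply: vmin_glb; last first.
  have := polar_bound [:: i] r c c; rewrite big_seq1 => H; apply: vle_trans H.
  have -> : mn [:: i] c = term c i by rewrite /mn /= /vmin vleNone.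
  exact: vle_trans (vadd_mono2 hm1 hm2) (vle_addr _ Heps).
apply: vle_trans (vD Hval _ _); apply: vmin_glb; last first.
  exact: vle_trans (vadd_mono2 hm2 hm2) IH.
rewrite (qZ Hq) expr2 !(vM Hval).
apply: vle_trans (vadd_mono2 hm1 hm1) _.
rewrite /term arith2; apply: vadd_mono2; first exact: vle_refl.
exact: W2.
Qed.

Lemma alpha_sum (l : 'I_n -> F) : alpha (\sum_i l i *: e`_i) = mn (enum 'I_n) l.
Proof.
rewrite /alpha /mn; congr vminl; apply: eq_map => i.
by rewrite /term (coord_sum_free (X := X)) // free_e.
Qed.

Lemma alpha_e (j : 'I_n) : alpha e`_j = Some s`_j.
Proof.
apply: vle_anti.
  apply: vle_trans (mn_le _ (mem_enum _ j)) _.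
  by rewrite /term coordX eqxx (v1 Hval) /= add0r lexx.
apply: le_mn => i _; rewrite /term coordX.
case: eqP => [->|_]; first by rewrite (v1 Hval) /= add0r lexx.
by rewrite (v0 Hval).
Qed.

Lemma alpha0 x : alpha x = None <-> x = 0.
Proof.
split=> [h|->].
  have hall : forall i, coord X i x = 0.
    move=> i; have := mn_le (fun i => coord X i x) (mem_enum _ i).
    rewrite -/(alpha x) h /term => /vle_None.
    by case E: (v (coord X i x)) => //= _; apply: (vNone Hval).
  by rewrite (expand x) big1 // => i _; rewrite hall scale0r.
apply: vle_None; apply: le_mn => i _.
by rewrite /term linear0 (v0 Hval).
Qed.

Lemma alphaZ l x : alpha (l *: x) = vadd (v l) (alpha x).
Proof.
rewrite /alpha /mn -vminl_vadd -map_comp; congr vminl; apply: eq_map => i /=.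
by rewrite /term linearZ /= (vM Hval) vaddA.
Qed.

Lemma alphaD x y : vle (vmin (alpha x) (alpha y)) (alpha (x + y)).
Proof.
apply: le_mn => i _.
apply: vle_trans (vmin_mono (mn_le _ (mem_enum _ i)) (mn_le _ (mem_enum _ i))) _.
rewrite /term -vadd_vmin; apply: vadd_mono; rewrite linearD /=; exact: vD.
Qed.

Lemma key : vnorm v alpha /\ compatible v q alpha eps.
Proof.
split.
  split.
  - exact: alpha0.
  - exact: alphaZ.
  - exact: alphaD.
  - exists e; split=> // l; rewrite alpha_sum /mn; congr vminl.
    by apply: eq_map => i; rewrite alphaZ alpha_e.
split.
- move=> x y; have := polar_bound (enum 'I_n) (enum 'I_n)
      (fun i => coord X i x) (fun i => coord X i y).
  by rewrite -!expand.
- move=> x; have := q_bound (enum 'I_n) (fun i => coord X i x).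
  by rewrite -!expand.
move=> x nx.
have ax : alpha x != None by apply/eqP => /alpha0 /eqP; rewrite (negbTE nx).
have := vminl_mem [seq term (fun i => coord X i x) i | i <- enum 'I_n].
rewrite inE -/(mn _ _) -/(alpha x) (negbTE ax) /= => /mapP[i _ hi].
have [j [hj hv hk]] := W3 (ltn_ord i).
exists e`_j; split; first exact: basis_not0 Hb (mem_nth 0 hj).
rewrite {1}(expand x) enum_idx (polar_suml Hq) (bigD1 i) //= big1 ?addr0; last first.
  by move=> k hki; rewrite (polarZl Hq) hk ?mulr0 // ltn_ord.
rewrite (polarZl Hq) (vM Hval) hv (alpha_e (Ordinal hj)) hi /term.
by case: (v (coord X i x)) => //= g; rewrite !addrA.
Qed.

End Key.

Lemma coreA (al eps : G) : exists k, k + k = al /\ k + (- eps - k) + eps = 0.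
Proof.
have [k hk] := halve al; exists k; split => //.
by rewrite addrCA subrr addr0 addNr.
Qed.

Lemma coreB (al be eps k : G) : k + k = al -> 0 <= al + be + eps + eps ->
  (- eps - k) + (- eps - k) <= be.
Proof.
move=> hk h; apply: (@lerK _ _ (al + eps + eps)).
have -> : (- eps - k) + (- eps - k) + (al + eps + eps) = 0.
  have E : eps + k + (eps + k) = k + k + eps + eps.
    by rewrite addrACA addrC addrA.
  by rewrite -hk -!opprD -E addNr.
by rewrite !addrA [be + al]addrC.
Qed.

Section Decomp.
Variables (F : fieldType) (v : F -> option G) (V : vectType F) (q : V -> F).
Hypotheses (Hval : valuation v) (Hq : quadratic_form q).

Definition Wprop (e : seq V) (s : seq G) (eps : G) : Prop :=
 [/\ size s = size e,
  forall i j, (i < size e)%N -> (j < size e)%N ->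
    vle (Some (s`_i + s`_j + eps)) (v (polar q e`_i e`_j)),
  forall i, (i < size e)%N -> vle (Some (s`_i + s`_i)) (v (q e`_i)) &
  forall i, (i < size e)%N -> exists j, [/\ (j < size e)%N,
    v (polar q e`_i e`_j) = Some (s`_i + s`_j + eps) &
    forall k, (k < size e)%N -> k != i -> polar q e`_k e`_j = 0]].

Definition Good (e : seq V) : Prop := exists eps0,
  [/\ in_half_value_group v eps0, 0 <= eps0, vle (Some eps0) (v 2%:R) &
      forall eps, eps0 <= eps -> exists s, Wprop e s eps].

Lemma eps0_zero : in_half_value_group v 0 /\ vle (Some 0) (v 2%:R).
Proof.
split; last exact: v2.
by exists 1; rewrite oner_neq0 (v1 Hval) addr0.
Qed.

Lemma natsub (a b c : nat) : (a < b + c)%N -> (b <= a)%N -> (a - b < c)%N.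
Proof. lia. Qed.
Lemma natadd (a b c : nat) : (a < b)%N -> (a < b + c)%N.
Proof. lia. Qed.
Lemma natadd2 (a b c : nat) : (a < c)%N -> (b + a < b + c)%N.
Proof. lia. Qed.
Lemma natf (a b : nat) : (b + a < b)%N = false.
Proof. lia. Qed.
Lemma natne (k i b : nat) : (b <= k)%N -> (b <= i)%N -> k != i -> (k - b != i - b)%N.
Proof. move=> h1 h2 /eqP h3; apply/eqP; lia. Qed.

Lemma Wcat e1 s1 e2 s2 eps : Wprop e1 s1 eps -> Wprop e2 s2 eps ->
  (forall x y, x \in e1 -> y \in e2 -> polar q x y = 0) ->
  Wprop (e1 ++ e2) (s1 ++ s2) eps.
Proof.
case=> hs1 A1 B1 C1 [hs2 A2 B2 C2] orth.
have orth' : forall x y, x \in e1 -> y \in e2 -> polar q y x = 0.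
  by move=> x y hx hy; rewrite polar_sym; auto.
have nthE : forall i, (e1 ++ e2)`_i = if (i < size e1)%N then e1`_i else e2`_(i - size e1).
  by move=> i; rewrite nth_cat.
have nthS : forall i, (s1 ++ s2)`_i = if (i < size e1)%N then s1`_i else s2`_(i - size e1).
  by move=> i; rewrite nth_cat hs1.
split.
- by rewrite !size_cat hs1 hs2.
- move=> i j; rewrite size_cat => hi hj; rewrite !nthE !nthS.
  case: (ltnP i (size e1)) => hi1; case: (ltnP j (size e1)) => hj1.
  + exact: A1.
  + by rewrite orth ?(v0 Hval) //; apply: mem_nth; [done | apply: natsub].
  + by rewrite orth' ?(v0 Hval) //; apply: mem_nth; [done | apply: natsub].
  + by apply: A2; apply: natsub.
- move=> i; rewrite size_cat => hi; rewrite !nthE !nthS.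
  case: (ltnP i (size e1)) => hi1; [exact: B1 | by apply: B2; apply: natsub].
move=> i; rewrite size_cat => hi; case: (ltnP i (size e1)) => hi1.
  have [j [hj hv hk]] := C1 i hi1.
  exists j; split; first exact: natadd.
    by rewrite !nthE !nthS hi1 hj.
  move=> k hk' hki; rewrite !nthE hj; case: (ltnP k (size e1)) => hk1.
    exact: hk.
  by rewrite orth' //; apply: mem_nth; [done | apply: natsub].
have [j [hj hv hk]] := C2 (i - size e1)%N (natsub hi hi1).
exists (size e1 + j)%N; split; first exact: natadd2.
  by rewrite !nthE !nthS natf ltnNge hi1 /= addKn.
move=> k hk' hki; rewrite !nthE natf addKn; case: (ltnP k (size e1)) => hk1.
  by rewrite orth //; apply: mem_nth.
by apply: hk; [apply: natsub | apply: natne].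
Qed.

Lemma Gcat e1 e2 : Good e1 -> Good e2 ->
  (forall x y, x \in e1 -> y \in e2 -> polar q x y = 0) -> Good (e1 ++ e2).
Proof.
move=> [a [ha1 ha2 ha3 ha4]] [b [hb1 hb2 hb3 hb4]] orth.
have [m [hm1 hm2 hm3]] : exists m, [/\ a <= m, b <= m & (m = a \/ m = b)].
  by case/orP: (Htot a b) => h; [exists b | exists a]; split; rewrite ?lexx ?h; auto.
exists m; split.
- by case: hm3 => ->.
- exact: gle_trans ha2 hm1.
- by case: hm3 => ->.
move=> eps he.
have [s1 hs1] := ha4 eps (gle_trans hm1 he).
have [s2 hs2] := hb4 eps (gle_trans hm2 he).
by exists (s1 ++ s2); apply: Wcat.
Qed.

Lemma Gnil : Good [::].
Proof.
have [h1 h2] := eps0_zero.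
exists 0; split => //; try exact: lexx.
by move=> eps _; exists [::]; split.
Qed.

Lemma Gblock1 z : polar q z z != 0 -> Good [:: z].
Proof.
move=> hz.
have hpz := polar_xx Hq z.
have h2 : (2%:R : F) != 0 by apply: contraNneq hz => h; rewrite hpz h mul0r.
have hqz : q z != 0 by apply: contraNneq hz => h; rewrite hpz h mulr0.
have [t ht] := vnz Hval h2.
have [ga hga] := vnz Hval hqz.
have [be hbe] := vnz Hval hz.
have hbe2 : be = t + ga by move: hbe; rewrite hpz (vM Hval) ht hga => -[].
exists t; split.
- exists (2%:R * 2%:R); rewrite mulf_neq0 // (vM Hval) ht //.
- by have := v2 Hval; rewrite ht.
- by rewrite ht /= lexx.
move=> eps he; have [h hh] := halve (be - eps).
exists [:: h]; split => //.
- move=> [|i] [|j] //= _ _; by rewrite hh subrK hbe /= lexx.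
- move=> [|i] //= _; rewrite hh hga /= hbe2.
  have := Hmono (ga - eps) he; rewrite addrA [eps + _]addrC subrK; exact.
- move=> [|i] //= _; exists 0%N; split => //.
    by rewrite hbe hh subrK.
  by move=> [|k].
Qed.

Lemma plane (a b : F) : ((2%:R : F) != 0 -> a = 0) -> exists eps0,
  [/\ in_half_value_group v eps0, 0 <= eps0, vle (Some eps0) (v 2%:R) &
    forall eps, eps0 <= eps -> exists s1 s2, [/\ s1 + s2 + eps = 0,
      vle (Some (s1 + s1)) (v a) & vle (Some (s2 + s2)) (v b)]].
Proof.
move=> h2a; have [z1 z2] := eps0_zero.
have zero_case : (forall eps, 0 <= eps -> exists s1 s2, [/\ s1 + s2 + eps = 0,
      vle (Some (s1 + s1)) (v a) & vle (Some (s2 + s2)) (v b)]) ->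
    exists eps0,
  [/\ in_half_value_group v eps0, 0 <= eps0, vle (Some eps0) (v 2%:R) &
    forall eps, eps0 <= eps -> exists s1 s2, [/\ s1 + s2 + eps = 0,
      vle (Some (s1 + s1)) (v a) & vle (Some (s2 + s2)) (v b)]].
  by move=> H; exists 0; split => //; exact: lexx.
have [[al Ea]|Ea] : (exists al, v a = Some al) \/ v a = None by case: (v a); eauto.
all: have [[be Eb]|Eb] : (exists be, v b = Some be) \/ v b = None by case: (v b); eauto.
- case/orP: (Htot 0 (al + be)) => hab.
    apply: zero_case => eps he; have [k [hk hs]] := coreA al eps.
    exists k, (- eps - k); split => //; first by rewrite Ea /= hk lexx.
    rewrite Eb /=; apply: coreB hk _.
    by have := lerD2 (lerD2 hab he) he; rewrite !addr0.
  have [h hh] := halve (- (al + be)).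
  have hna : a != 0 := vSome Hval Ea.
  have hnb : b != 0 := vSome Hval Eb.
  exists h; split.
  + exists (a * b)^-1; rewrite invr_eq0 mulf_neq0 //.
    by rewrite (vinv Hval (x := a * b) (g := al + be)) ?hh // (vM Hval) Ea Eb.
  + apply: half_ge0; rewrite hh.
    by have := Hmono (- (al + be)) hab; rewrite subrr add0r.
  + case E2: ((2%:R : F) == 0); first by move/eqP: E2 => ->; rewrite (v0 Hval).
    by move: Ea; rewrite h2a ?E2 // (v0 Hval).
  move=> eps he; have [k [hk hs]] := coreA al eps.
  exists k, (- eps - k); split => //; first by rewrite Ea /= hk lexx.
  rewrite Eb /=; apply: coreB hk _.
  have := Hmono (al + be) (lerD2 he he); rewrite hh [_ + (al + be)]addrC subrr.
  by rewrite [eps + eps + _]addrC !addrA.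
- apply: zero_case => eps he; have [k [hk hs]] := coreA al eps.
  by exists k, (- eps - k); split => //; rewrite ?Ea ?Eb /= ?hk ?lexx.
- apply: zero_case => eps he; have [k [hk hs]] := coreA be eps.
  exists (- eps - k), k; split => //; try by rewrite ?Ea ?Eb /= ?hk ?lexx.
  by rewrite [- eps - k + k]addrC.
apply: zero_case => eps he; exists (- eps), 0; split; rewrite ?Ea ?Eb //.
by rewrite addr0 addNr.
Qed.

Lemma Gblock2 x y : polar q x y = 1 -> polar q x x = 0 -> polar q y y = 0 ->
  Good [:: x; y].
Proof.
move=> hxy hxx hyy.
have hyx : polar q y x = 1 by rewrite polar_sym.
have h2a : (2%:R : F) != 0 -> q x = 0.
  move=> h2; move: hxx; rewrite (polar_xx Hq) => /eqP; rewrite mulf_eq0 (negbTE h2) /=.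
  by move/eqP.
have [eps0 [e1 e2 e3 e4]] := plane (q y) h2a.
exists eps0; split => // eps he.
have [s1 [s2 [hs hq1 hq2]]] := e4 eps he.
have hs' : s2 + s1 + eps = 0 by rewrite [s2 + s1]addrC.
exists [:: s1; s2]; split => //.
- move=> [|[|i]] [|[|j]] //= _ _.
  + by rewrite hxx (v0 Hval).
  + by rewrite hxy (v1 Hval) hs /= lexx.
  + by rewrite hyx (v1 Hval) hs' /= lexx.
  + by rewrite hyy (v0 Hval).
- by move=> [|[|i]] //= _.
move=> [|[|i]] //= _.
  exists 1%N; split => //; first by rewrite hxy (v1 Hval) hs.
  by move=> [|[|k]] //= _ _.
exists 0%N; split => //; first by rewrite hyx (v1 Hval) hs'.
by move=> [|[|k]] //= _ _.
Qed.

End Decomp.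

Section Induct.
Variables (F : fieldType) (v : F -> option G) (V : vectType F) (q : V -> F).
Hypotheses (Hval : valuation v) (Hq : quadratic_form q).

Definition nondeg (U : {vspace V}) := forall x, x \in U ->
  (forall y, y \in U -> polar q x y = 0) -> x = 0.

Lemma orth_span_r (x : V) (Y : seq V) : (forall y, y \in Y -> polar q x y = 0) ->
  forall w, w \in <<Y>>%VS -> polar q x w = 0.
Proof.
move=> h w /(coord_span (X := in_tuple Y)) ->.
rewrite (polar_sumr Hq) big1 // => i _; rewrite (polarZr Hq) h ?mulr0 //.
by apply: mem_nth; rewrite ltn_ord.
Qed.

Lemma orth_span_l (x : V) (Y : seq V) : (forall y, y \in Y -> polar q y x = 0) ->
  forall w, w \in <<Y>>%VS -> polar q w x = 0.
Proof.
move=> h w hw; rewrite polar_sym; apply: (orth_span_r _ hw) => y hy.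
by rewrite polar_sym; apply: h.
Qed.

Lemma step (U : {vspace V}) (B : seq V) (pi : V -> V) :
  nondeg U -> {subset B <= U} -> free B -> B != [::] ->
  (forall u, u - pi u \in <<B>>%VS) ->
  (forall u x, x \in B -> polar q (pi u) x = 0) ->
  (forall w, w \in <<B>>%VS -> (forall x, x \in B -> polar q w x = 0) -> w = 0) ->
  Good v q B ->
  (forall W : {vspace V}, (\dim W < \dim U)%N -> nondeg W ->
     exists e, basis_of W e /\ Good v q e) ->
  exists e, basis_of U e /\ Good v q e.
Proof.
move=> hU hBU hfB hB0 hpi1 hpi2 hBnd hGB IH.
set W := (<<map pi (vbasis U)>>)%VS.
have hBsub : (<<B>> <= U)%VS by apply/span_subvP.
have hWU : (W <= U)%VS.
  apply/span_subvP => _ /mapP[u hu ->].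
  have huU : u \in U := basis_mem (vbasisP U) hu.
  have -> : pi u = u - (u - pi u) by rewrite opprB addrC subrK.
  by rewrite rpredB // (subvP hBsub).
have hWorth : forall w, w \in W -> forall x, x \in B -> polar q w x = 0.
  move=> w hw x hx; apply: (orth_span_l _ hw) => _ /mapP[u _ ->]; exact: hpi2.
have hcap : (<<B>> :&: W = 0)%VS.
  apply/eqP; rewrite -subv0; apply/subvP => w; rewrite memv_cap memv0 => /andP[wB wW].
  apply/eqP; apply: hBnd => // x hx; exact: hWorth.
have hsum : (<<B>> + W = U)%VS.
  apply/eqP; rewrite eqEsubv subv_add hBsub hWU /=.
  rewrite -{1}(span_basis (vbasisP U)); apply/span_subvP => u hu.
  suff : (u - pi u) + pi u \in (<<B>> + W)%VS by rewrite subrK.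
  by apply: memv_add; [exact: hpi1 | apply: memv_span; apply: map_f].
have hx : head 0 B \in B by case: (B) hB0 => //= ? ?; rewrite mem_head.
have hdim : (\dim W < \dim U)%N.
  rewrite (ltn_leqif (dimv_leqif_eq hWU)); apply/negP => /eqP hWe.
  have : head 0 B \in (<<B>> :&: W)%VS by rewrite memv_cap memv_span // hWe hBU.
  rewrite hcap memv0; apply/negP; exact: free_not0 hfB hx.
have hWnd : nondeg W.
  move=> w hw hw0; apply: hU; first exact: (subvP hWU).
  move=> u; rewrite -hsum => /memv_addP[b hb [w' hw' ->]].
  rewrite (polarDr Hq) (hw0 w' hw') addr0.
  by apply: (orth_span_r _ hb) => y hy; apply: hWorth.
have [e' [he' hGe']] := IH W hdim hWnd.
exists (B ++ e'); split.
  rewrite -hsum; apply: cat_basis => //; first exact/directv_addP.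
  by rewrite /basis_of eqxx.
apply: Gcat => // x y hx' hy; have hyW := basis_mem he' hy.
rewrite polar_sym; exact: hWorth.
Qed.


Lemma sub3 (u p r : V) : u - (u - p - r) = p + r.
Proof. by rewrite !opprB addrCA [u + _]addrCA subrr addr0 addrC. Qed.

Lemma decomp n : forall U : {vspace V}, (\dim U <= n)%N -> nondeg U ->
  exists e, basis_of U e /\ Good v q e.
Proof.
have nil_case : exists e, basis_of 0%VS e /\ Good v q e.
  by exists [::]; split; [exact: nil_basis | exact: Gnil].
elim: n => [|n IHn] U hd hU.
  have : (\dim U == 0)%N by rewrite -leqn0.
  by rewrite dimv_eq0 => /eqP ->.
case: (eqVneq U 0%VS) => [->|hU0]; first exact: nil_case.
have IH' : forall W : {vspace V}, (\dim W < \dim U)%N -> nondeg W ->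
    exists e, basis_of W e /\ Good v q e.
  move=> W hW; apply: IHn; rewrite -ltnS; exact: leq_trans hW hd.
case: (classic (exists z, z \in U /\ polar q z z != 0)) => [[z [hzU hz]] | hno].
  apply: (@step U [:: z] (fun u => u - (polar q u z / polar q z z) *: z)) => //.
  - by move=> x; rewrite inE => /eqP ->.
  - by rewrite seq1_free; apply: contraNneq hz => ->; rewrite (polar0l Hq).
  - move=> u /=; rewrite opprB addrC subrK; apply: rpredZ; exact: memv_span1.
  - move=> u x; rewrite inE => /eqP -> /=.
    by rewrite (polarBl Hq) (polarZl Hq) divfK // subrr.
  - move=> w; rewrite span_seq1 => /vlineP[k ->] h.
    have := h z (mem_head _ _); rewrite (polarZl Hq) => /eqP.
    by rewrite mulf_eq0 (negbTE hz) orbF => /eqP ->; rewrite scale0r.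
  - exact: Gblock1.
have hzz : forall z, z \in U -> polar q z z = 0.
  move=> z hz; apply/eqP; apply/negP => /negP hn; apply: hno; by exists z.
set x := vpick U.
have hxU : x \in U := memv_pick U.
have hx0 : x != 0 by rewrite vpick0.
have [y [hyU hy]] : exists y, y \in U /\ polar q x y != 0.
  case: (classic (exists y, y \in U /\ polar q x y != 0)) => // hn.
  suff : x = 0 by move/eqP; rewrite (negbTE hx0).
  apply: hU => // y hyU; apply/eqP; apply/negP => /negP h; apply: hn; by exists y.
set y' := (polar q x y)^-1 *: y.
have hy'U : y' \in U by rewrite rpredZ.
have hxy' : polar q x y' = 1 by rewrite (polarZr Hq) mulVf.
have hy'x : polar q y' x = 1 by rewrite polar_sym.
have hxx := hzz x hxU.
have hyy := hzz y' hy'U.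
clearbody y'.
apply: (@step U [:: x; y'] (fun u => u - polar q u y' *: x - polar q u x *: y')) => //.
- by move=> w; rewrite !inE => /orP[/eqP->|/eqP->].
- rewrite free_cons seq1_free span_seq1; apply/andP; split.
    apply/negP => /vlineP[k hk]; move: hxy'; rewrite hk (polarZl Hq) hyy mulr0 => /eqP.
    by rewrite eq_sym oner_eq0.
  by apply/eqP => h0; move: hxy'; rewrite h0 (polar0r Hq) => /eqP; rewrite eq_sym oner_eq0.
- move=> u /=; rewrite sub3; apply: rpredD; apply: rpredZ; apply: memv_span;
    by rewrite !inE eqxx ?orbT.
- move=> u w; rewrite !inE => /orP[/eqP->|/eqP->] /=.
    by rewrite !(polarBl Hq) !(polarZl Hq) hxx hy'x mulr0 subr0 mulr1 subrr.
  by rewrite !(polarBl Hq) !(polarZl Hq) hxy' hyy mulr0 subr0 mulr1 subrr.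
- move=> w; rewrite span_cons span_seq1 => /memv_addP[w1 /vlineP[a ->] [w2 /vlineP[b ->] ->]] h.
  have h1 := h x (mem_head _ _); have h2 := h y' ltac:(by rewrite !inE eqxx orbT).
  move: h1 h2; rewrite !(polarDl Hq) !(polarZl Hq) hxx hy'x hxy' hyy !mulr0 !mulr1.
  by rewrite add0r addr0 => -> ->; rewrite !scale0r addr0.
- exact: Gblock2.
Qed.

Lemma nonsing_main : nonsingular q -> exists (alpha : V -> option G) (eps : G),
  [/\ vnorm v alpha, compatible v q alpha eps,
      in_half_value_group v eps, 0 <= eps & vle (Some eps) (v 2%:R)].
Proof.
move=> Hns.
have hnd : nondeg fullv by move=> x _ h; apply: Hns => y; apply: h; exact: memvf.
have [e [he [eps0 [h1 h2 h3 h4]]]] := decomp (leqnn _) hnd.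
have [s [hs W1 W2 W3]] := h4 eps0 (lexx eps0).
have [hn hc] := key Hval Hq he h2 W1 W2 W3.
by exists (alpha v e s), eps0; split.
Qed.

End Induct.

Lemma nl1 i j n : (i < n)%N -> (j < n)%N -> ((j == i + n) || (i == j + n))%N = false.
Proof. move=> h1 h2; apply/negP => /orP[/eqP|/eqP]; lia. Qed.
Lemma nl2 i j n : (i < n)%N -> (n <= j)%N -> ((j == i + n) || (i == j + n))%N = (i == j - n)%N.
Proof.
move=> h1 h2; apply/idP/idP => [/orP[/eqP h|/eqP h]|/eqP h]; apply/eqP; try lia.
Qed.
Lemma nl3 i j n : (n <= i)%N -> (j < n)%N -> ((j == i + n) || (i == j + n))%N = (j == i - n)%N.
Proof.
move=> h1 h2; apply/idP/idP => [/orP[/eqP h|/eqP h]|/eqP h]; apply/eqP; try lia.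
Qed.
Lemma nl4 i j n : (n <= i)%N -> (n <= j)%N -> (i < n + n)%N -> (j < n + n)%N ->
  ((j == i + n) || (i == j + n))%N = false.
Proof. move=> h1 h2 h3 h4; apply/negP => /orP[/eqP|/eqP]; lia. Qed.
Lemma nl5 i k n : (k < n + n)%N -> (k != i)%N -> (i < n)%N ->
  ((i + n == k + n) || (k == i + n + n))%N = false.
Proof. move=> h1 /eqP h2 h3; apply/negP => /orP[/eqP|/eqP]; lia. Qed.
Lemma nl6 i k n : (n <= i)%N -> (i < n + n)%N -> (k < n + n)%N ->
  ((i - n == k + n) || (k == i - n + n))%N = (k == i)%N.
Proof.
move=> h1 h2 h3; apply/idP/idP => [/orP[/eqP h|/eqP h]|/eqP h]; apply/eqP; try lia.
Qed.

Section Hyp.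
Variables (F : fieldType) (v : F -> option G) (V : vectType F) (q : V -> F).
Hypotheses (Hval : valuation v) (Hq : quadratic_form q).

Lemma hyp_main : hyperbolic q -> exists alpha : V -> option G,
  vnorm v alpha /\ compatible v q alpha 0.
Proof.
move=> [n [e [f [hb hform]]]].
pose E (a b : 'I_n -> F) := \sum_(i < n) (a i *: tnth e i + b i *: tnth f i).
have ED : forall a b c d, E a b + E c d = E (fun i => a i + c i) (fun i => b i + d i).
  move=> a b c d; rewrite /E -big_split; apply: eq_bigr => i _.
  by rewrite !scalerDl addrACA.
have EP : forall a b c d, polar q (E a b) (E c d) = \sum_(i < n) (a i * d i + c i * b i).
  move=> a b c d; rewrite /polar ED !hform -!sumrB; apply: eq_bigr => i _; ring.
pose dl (k : 'I_n) := fun i : 'I_n => ((i == k)%:R : F).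
pose Z := fun _ : 'I_n => (0 : F).
have Ee : forall k, tnth e k = E (dl k) Z.
  move=> k; rewrite /E (bigD1 k) //= /dl /Z eqxx scale1r scale0r addr0 big1 ?addr0 //.
  by move=> i /negbTE ->; rewrite !scale0r addr0.
have Ef : forall k, tnth f k = E Z (dl k).
  move=> k; rewrite /E (bigD1 k) //= /dl /Z eqxx scale1r scale0r add0r big1 ?addr0 //.
  by move=> i /negbTE ->; rewrite !scale0r addr0.
have sdd : forall i j, \sum_(k < n) (dl i k * dl j k) = (i == j)%:R.
  move=> i j; rewrite (bigD1 i) //= big1 => [|k /negbTE hk]; last by rewrite /dl hk mul0r.
  by rewrite /dl eqxx mul1r addr0.
have pee : forall i j, polar q (tnth e i) (tnth e j) = 0.
  move=> i j; rewrite !Ee EP big1 // => k _; by rewrite /Z !mulr0 addr0.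
have pff : forall i j, polar q (tnth f i) (tnth f j) = 0.
  move=> i j; rewrite !Ef EP big1 // => k _; by rewrite /Z !mul0r addr0.
have pef : forall i j, polar q (tnth e i) (tnth f j) = (i == j)%:R.
  move=> i j; rewrite Ee Ef EP -sdd; apply: eq_bigr => k _; by rewrite /Z mulr0 addr0.
have pfe : forall i j, polar q (tnth f i) (tnth e j) = (j == i)%:R.
  move=> i j; rewrite Ee Ef EP -sdd; apply: eq_bigr => k _; by rewrite /Z mul0r add0r mulrC.
have qe : forall i, q (tnth e i) = 0.
  move=> i; rewrite Ee /E hform big1 // => k _; by rewrite /Z mulr0.
have qf : forall i, q (tnth f i) = 0.
  move=> i; rewrite Ef /E hform big1 // => k _; by rewrite /Z mul0r.
set L := tval e ++ tval f.
have hsz : size L = (n + n)%N by rewrite size_cat !size_tuple.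
have Le : forall i (hi : (i < n)%N), L`_i = tnth e (Ordinal hi).
  by move=> i hi; rewrite nth_cat size_tuple hi (tnth_nth 0).
have Lf : forall i (hi : (n <= i)%N) (hi2 : (i < n + n)%N),
    L`_i = tnth f (Ordinal (natsub hi2 hi)).
  by move=> i hi hi2; rewrite nth_cat size_tuple ltnNge hi /= (tnth_nth 0).
have polL : forall i j, (i < n + n)%N -> (j < n + n)%N ->
    polar q L`_i L`_j = ((j == i + n) || (i == j + n))%:R.
  move=> i j hi hj.
  case: (ltnP i n) => hi1; case: (ltnP j n) => hj1.
  - by rewrite (Le _ hi1) (Le _ hj1) pee nl1.
  - by rewrite (Le _ hi1) (Lf _ hj1 hj) pef nl2.
  - by rewrite (Lf _ hi1 hi) (Le _ hj1) pfe nl3.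
  - by rewrite (Lf _ hi1 hi) (Lf _ hj1 hj) pff nl4.
have qL : forall i, (i < n + n)%N -> q L`_i = 0.
  move=> i hi; case: (ltnP i n) => hi1; first by rewrite (Le _ hi1) qe.
  by rewrite (Lf _ hi1 hi) qf.
have vb : forall b : bool, vle (Some (0 + 0 + 0 : G)) (v b%:R).
  by case; rewrite ?(v1 Hval) ?(v0 Hval) //= !addr0 lexx.
have := @key F v V q Hval Hq L [::] 0 hb (lexx 0).
rewrite hsz; case.
- by move=> i j hi hj; rewrite polL // !nth_nil; apply: vb.
- by move=> i hi; rewrite qL // (v0 Hval).
- move=> i hi; case: (ltnP i n) => hi1.
    exists (i + n)%N; split; first lia.
      by rewrite polL ?eqxx //= ?(v1 Hval) ?nth_nil ?addr0 //; lia.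
    move=> k hk hki; rewrite polL //; last lia.
    by rewrite nl5.
  exists (i - n)%N; split; first lia.
    by rewrite polL // ?nl6 ?eqxx //= ?(v1 Hval) ?nth_nil ?addr0 //; lia.
  move=> k hk hki; rewrite polL //; last lia.
  by rewrite nl6 // (negbTE hki).
by move=> hn hc; exists (alpha v L [::]).
Qed.

End Hyp.

End OG.

Unset Implicit Arguments.
Unset Strict Implicit.

Theorem proposition4p3 (F : fieldType) (G : porderZmodType) (v : F -> option G) :
  divisible_ordered_group G -> valuation v ->
  (forall (V : vectType F) (q : V -> F),
     quadratic_form q -> nonsingular q ->
     exists (alpha : V -> option G) (eps : G),
       [/\ vnorm v alpha, compatible v q alpha eps,
           in_half_value_group v eps, 0 <= eps & vle (Some eps) (v 2%:R)])
  /\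
  (forall (V : vectType F) (q : V -> F),
     quadratic_form q -> hyperbolic q ->
     exists alpha : V -> option G, vnorm v alpha /\ compatible v q alpha 0).
Proof.
move=> [Htot Hmono Hdiv] Hval; split.
- move=> V q Hq Hns; exact: (nonsing_main Htot Hmono Hdiv Hval Hq Hns).
- move=> V q Hq Hh; exact: (hyp_main Htot Hmono Hval Hq Hh).
Qed.
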